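(* Let $f\in\mathcal A_+(1)$ satisfy $\|f\|_{L^1(\mathbb{R})}=1$, $\widehat f=f$, $f(0)=0$, and $r(f)\in[\tfrac14,\tfrac1{\sqrt2}]$. Then for every $x\in(0,r(f)]$, $$f_+(x)\le \frac12+\frac{\sin\!\big(2\pi(r(f)-\tfrac14)x\big)-\sin(2\pi r(f)x)}{\pi x}.$$
   Context: Fourier transform: $\widehat f(\xi)=\int_{\mathbb{R}} f(x)e^{-2\pi i x\xi}\,dx$. $r(f):=\inf\{r>0: f(x)\ge 0 \text{ for all } |x|\ge r\}$. $\mathcal A_+(1)$ is the set of $f:\mathbb{R}\to\mathbb{R}$ with $f,\widehat f\in L^1(\mathbb{R})$, $\widehat f$ real-valued, $f$ eventually nonnegative (i.e. $\ge0$ for all large $|x|$) with $\widehat f(0)\le0$, and $\widehat f$ eventually nonnegative with $f(0)\le0$. $f_+:=\max\{f,0\}$. *)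

(* Defs.v *)
From Stdlib Require Import Reals Lra.
Open Scope R_scope.

Definition has_integral_R (g : R -> R) (l : R) : Prop :=
  (forall a b : R, inhabited (Riemann_integrable g a b)) /\
  forall eps : R, 0 < eps -> exists M : R, forall (a b : R)
    (pr : Riemann_integrable g a b),
    a <= - M -> M <= b -> Rabs (RiemannInt pr - l) < eps.

Definition L1 (f : R -> R) : Prop :=
  (forall a b : R, inhabited (Riemann_integrable f a b)) /\
  exists l : R, has_integral_R (fun x => Rabs (f x)) l.

(* fh is the Fourier transform of f, and it is real-valued:
   fh(xi) = int f(x) e^{-2 pi i x xi} dx, i.e. real part int f(x) cos(2 pi x xi),
   imaginary part - int f(x) sin(2 pi x xi) = 0. *)
Definition is_fourier (f fh : R -> R) : Prop :=
  forall xi : R,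
    has_integral_R (fun x => f x * cos (2 * PI * x * xi)) (fh xi) /\
    has_integral_R (fun x => f x * sin (2 * PI * x * xi)) 0.

Definition eventually_nonneg (f : R -> R) : Prop :=
  exists R0 : R, forall x : R, R0 <= Rabs x -> 0 <= f x.

Definition A_plus1 (f fh : R -> R) : Prop :=
  L1 f /\ L1 fh /\ is_fourier f fh /\
  eventually_nonneg f /\ fh 0 <= 0 /\
  eventually_nonneg fh /\ f 0 <= 0.

Definition nonneg_beyond (f : R -> R) (r : R) : Prop :=
  forall x : R, r <= Rabs x -> 0 <= f x.

Definition is_r_of (f : R -> R) (r : R) : Prop :=
  (forall r' : R, 0 < r' -> nonneg_beyond f r' -> r <= r') /\
  (forall eps : R, 0 < eps ->
     exists r' : R, 0 < r' /\ nonneg_beyond f r' /\ r' < r + eps).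

Definition pos_part (f : R -> R) (x : R) : R := Rmax (f x) 0.

(* Main.v *)
Require Import Defs.
From Stdlib Require Import Reals Lra FunctionalExtensionality.
From Coquelicot Require Import Coquelicot.
Open Scope R_scope.

Lemma has_int_lin (g h : R -> R) (a b l : R) :
  has_integral_R g a -> has_integral_R h b ->
  has_integral_R (fun y => g y + l * h y) (a + l * b).
Proof.
  intros [Ig Cg] [Ih Ch]. split.
  - intros u v. destruct (Ig u v) as [p]. destruct (Ih u v) as [q].
    constructor. exact (RiemannInt_P10 l p q).
  - intros eps Heps.
    destruct (Cg (eps/2)) as [M1 HM1]; [lra|].
    assert (Hl : 0 < 2 * (Rabs l + 1)) by (pose proof (Rabs_pos l); lra).
    destruct (Ch (eps/(2 * (Rabs l + 1)))) as [M2 HM2].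
    { apply Rdiv_lt_0_compat; lra. }
    exists (Rmax M1 M2). intros u v pr Hu Hv.
    destruct (Ig u v) as [p]. destruct (Ih u v) as [q].
    rewrite (RiemannInt_P13 p q pr).
    assert (A1 := HM1 u v p ltac:(pose proof (Rmax_l M1 M2); lra) ltac:(pose proof (Rmax_l M1 M2); lra)).
    assert (A2 := HM2 u v q ltac:(pose proof (Rmax_r M1 M2); lra) ltac:(pose proof (Rmax_r M1 M2); lra)).
    replace (RiemannInt p + l * RiemannInt q - (a + l * b))
      with ((RiemannInt p - a) + l * (RiemannInt q - b)) by ring.
    eapply Rle_lt_trans; [apply Rabs_triang|].
    rewrite Rabs_mult.
    assert (Rabs l * Rabs (RiemannInt q - b) <= Rabs l * (eps / (2 * (Rabs l + 1)))).
    { apply Rmult_le_compat_l; [apply Rabs_pos|lra]. }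
    assert (Rabs l * (eps / (2 * (Rabs l + 1))) <= eps / 2).
    { unfold Rdiv. rewrite Rinv_mult.
      assert (0 < / (Rabs l + 1)) by (apply Rinv_0_lt_compat; pose proof (Rabs_pos l); lra).
      assert (Rabs l * / (Rabs l + 1) <= 1).
      { apply (Rmult_le_reg_r (Rabs l + 1)); [pose proof (Rabs_pos l); lra|].
        rewrite Rmult_assoc, Rinv_l; [|pose proof (Rabs_pos l); lra]. lra. }
      nra. }
    lra.
Qed.

Lemma cmp (G H K : R -> R) (a b s r : R)
  (pK1 : Riemann_integrable K (-r) (-s)) (pK2 : Riemann_integrable K s r) :
  0 <= s <= r -> has_integral_R G a -> has_integral_R H b ->
  (forall y, r < Rabs y -> G y <= H y) -> (forall y, Rabs y < s -> G y <= H y) ->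
  (forall y, s < Rabs y < r -> G y <= H y + K y) ->
  a <= b + RiemannInt pK1 + RiemannInt pK2.
Proof.
  intros Hsr [IG CG] [IH CH] P1 P2 P3.
  apply Rnot_lt_le. intro Hlt.
  set (eps := (a - (b + RiemannInt pK1 + RiemannInt pK2)) / 3).
  destruct (CG eps) as [M1 HM1]; [unfold eps; lra|].
  destruct (CH eps) as [M2 HM2]; [unfold eps; lra|].
  set (M := Rmax (Rmax M1 M2) r).
  assert (M1 <= M /\ M2 <= M /\ r <= M) as (L1 & L2 & L3).
  { unfold M. pose proof (Rmax_l (Rmax M1 M2) r). pose proof (Rmax_r (Rmax M1 M2) r).
    pose proof (Rmax_l M1 M2). pose proof (Rmax_r M1 M2). lra. }
  destruct (IG (-M) M) as [g0]. destruct (IH (-M) M) as [h0].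
  assert (A1 := HM1 _ _ g0 ltac:(lra) ltac:(lra)).
  assert (A2 := HM2 _ _ h0 ltac:(lra) ltac:(lra)).
  assert (Key : RiemannInt g0 <= RiemannInt h0 + RiemannInt pK1 + RiemannInt pK2).
  { destruct (IG (-M) (-r)) as [g1]. destruct (IG (-r) M) as [g1'].
    destruct (IG (-r) (-s)) as [g2]. destruct (IG (-s) M) as [g2'].
    destruct (IG (-s) s) as [g3]. destruct (IG s M) as [g3'].
    destruct (IG s r) as [g4]. destruct (IG r M) as [g5].
    destruct (IH (-M) (-r)) as [h1]. destruct (IH (-r) M) as [h1'].
    destruct (IH (-r) (-s)) as [h2]. destruct (IH (-s) M) as [h2'].
    destruct (IH (-s) s) as [h3]. destruct (IH s M) as [h3'].
    destruct (IH s r) as [h4]. destruct (IH r M) as [h5].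
    rewrite <- (RiemannInt_P26 g1 g1' g0), <- (RiemannInt_P26 g2 g2' g1'),
      <- (RiemannInt_P26 g3 g3' g2'), <- (RiemannInt_P26 g4 g5 g3').
    rewrite <- (RiemannInt_P26 h1 h1' h0), <- (RiemannInt_P26 h2 h2' h1'),
      <- (RiemannInt_P26 h3 h3' h2'), <- (RiemannInt_P26 h4 h5 h3').
    assert (E1 : RiemannInt g1 <= RiemannInt h1).
    { apply RiemannInt_P19; [lra|]. intros y Hy. apply P1.
      rewrite Rabs_left; lra. }
    assert (E3 : RiemannInt g3 <= RiemannInt h3).
    { apply RiemannInt_P19; [lra|]. intros y Hy. apply P2.
      apply Rabs_def1; lra. }
    assert (E5 : RiemannInt g5 <= RiemannInt h5).
    { apply RiemannInt_P19; [lra|]. intros y Hy. apply P1.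
      rewrite Rabs_right; lra. }
    assert (E2 : RiemannInt g2 <= RiemannInt h2 + RiemannInt pK1).
    { rewrite <- (RiemannInt_plus _ _ _ _ h2 pK1 (Riemann_integrable_plus _ _ _ _ h2 pK1)).
      apply RiemannInt_P19; [lra|]. intros y Hy. apply P3.
      rewrite Rabs_left; lra. }
    assert (E4 : RiemannInt g4 <= RiemannInt h4 + RiemannInt pK2).
    { rewrite <- (RiemannInt_plus _ _ _ _ h4 pK2 (Riemann_integrable_plus _ _ _ _ h4 pK2)).
      apply RiemannInt_P19; [lra|]. intros y Hy. apply P3.
      rewrite Rabs_right; lra. }
    lra. }
  apply Rabs_def2 in A1. apply Rabs_def2 in A2. unfold eps in *. lra.
Qed.

Lemma has_int_le (G H : R -> R) (a b : R) :
  has_integral_R G a -> has_integral_R H b -> (forall y, G y <= H y) -> a <= b.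
Proof.
  intros HG HH P.
  assert (pK : Riemann_integrable (fun _ => 0) (-0) (-0)) by (apply continuity_implies_RiemannInt; [lra| intros; apply continuity_const; intros ? ?; reflexivity]).
  assert (pK' : Riemann_integrable (fun _ => 0) 0 0) by (apply continuity_implies_RiemannInt; [lra| intros; apply continuity_const; intros ? ?; reflexivity]).
  pose proof (cmp G H (fun _ => 0) a b 0 0 pK pK' ltac:(lra) HG HH
    ltac:(intros; apply P) ltac:(intros; apply P) ltac:(intros; rewrite Rplus_0_r; apply P)) as X.
  rewrite !RiemannInt_const in X. lra.
Qed.

Lemma K_int (c0 x u v : R) : 0 < x ->
  is_RInt (fun y => c0 - cos (2 * PI * y * x)) u v
   ((c0 * v - sin (2 * PI * v * x) / (2 * PI * x)) - (c0 * u - sin (2 * PI * u * x) / (2 * PI * x))).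
Proof.
  intros Hx. pose proof PI_RGT_0.
  apply (is_RInt_derive (fun y => c0 * y - sin (2 * PI * y * x) / (2 * PI * x))).
  - intros y _. auto_derive; [auto|]. field. lra.
  - intros y _. apply (ex_derive_continuous (fun y => c0 - cos (2 * PI * y * x))).
    auto_derive. auto.
Qed.

Lemma cos_abs (t x : R) : cos (2 * PI * t * x) = cos (2 * PI * Rabs t * x).
Proof.
  unfold Rabs; destruct (Rcase_abs t); [|reflexivity].
  replace (2 * PI * - t * x) with (- (2 * PI * t * x)) by ring. now rewrite cos_neg.
Qed.

Theorem lemma2 (f : R -> R) (r : R) :
  A_plus1 f f ->
  has_integral_R (fun x => Rabs (f x)) 1 ->
  f 0 = 0 ->
  is_r_of f r ->
  1 / 4 <= r <= 1 / sqrt 2 ->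
  forall x : R, 0 < x <= r ->
    pos_part f x <=
      1 / 2 + (sin (2 * PI * (r - 1 / 4) * x) - sin (2 * PI * r * x)) / (PI * x).
Proof.
  intros HA Habs f0 Hr Hrb x Hx.
  destruct HA as (HL1 & _ & HF & _).
  pose proof PI_RGT_0 as HPI.
  set (s := r - 1/4).
  set (c0 := cos (2 * PI * s * x)).
  assert (Hrr : r * r <= 1/2).
  { assert (Hq := sqrt_sqrt 2 ltac:(lra)). assert (Hq0 := sqrt_lt_R0 2 ltac:(lra)).
    set (q := sqrt 2) in *.
    assert (r * q <= 1).
    { replace 1 with ((1 / q) * q) by (field; lra). apply Rmult_le_compat_r; lra. }
    nra. }
  assert (Hpi : forall t, Rabs t <= r -> 0 <= 2 * PI * Rabs t * x <= PI).
  { intros t Ht. pose proof (Rabs_pos t). split; [|]. 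
    - apply Rmult_le_pos; [|lra]. apply Rmult_le_pos; lra.
    - assert (Rabs t * x <= 1/2) by nra. nra. }
  assert (Hpos : forall y, r < Rabs y -> 0 <= f y).
  { intros y Hy. destruct Hr as [_ Hr2]. destruct (Hr2 (Rabs y - r)) as (r' & _ & Hb & Hlt); [lra|].
    apply Hb. lra. }
  assert (F0 : has_integral_R f 0).
  { destruct (HF 0) as [H0 _].
    replace f with (fun t => f t * cos (2 * PI * t * 0)). { rewrite f0 in H0. exact H0. }
    apply functional_extensionality. intro t. rewrite Rmult_0_r, cos_0. ring. }
  assert (Hge : forall y, -1 <= f y).
  { intro y. destruct (HF y) as [Hy _].
    pose proof (has_int_lin _ _ _ _ (-1) Habs Habs) as Z.
    pose proof (has_int_lin _ _ _ _ 1 Habs Hy) as W.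
    pose proof (has_int_le _ _ _ _ Z W) as X.
    cut (1 + -1 * 1 <= 1 + 1 * f y); [lra|]. apply X.
    intro t. pose proof (COS_bound (2 * PI * t * y)).
    unfold Rabs; destruct (Rcase_abs (f t)); nra. }
  destruct (HF x) as [HG _].
  pose proof (has_int_lin _ _ _ _ (-1) Habs F0) as Hh.
  pose proof (has_int_lin _ _ _ _ ((1 - c0)/2) F0 Hh) as HH.
  assert (Hs : 0 <= s <= r) by (unfold s; lra).
  pose proof (K_int c0 x (-r) (-s) ltac:(lra)) as I1.
  pose proof (K_int c0 x s r ltac:(lra)) as I2.
  assert (pK1 := ex_RInt_Reals_0 _ _ _ (ex_intro _ _ I1)).
  assert (pK2 := ex_RInt_Reals_0 _ _ _ (ex_intro _ _ I2)).
  assert (V1 := RInt_Reals _ _ _ pK1). rewrite (is_RInt_unique _ _ _ _ I1) in V1.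
  assert (V2 := RInt_Reals _ _ _ pK2). rewrite (is_RInt_unique _ _ _ _ I2) in V2.
  assert (Hc0 : forall t, Rabs t <= r -> (Rabs t <= s -> c0 <= cos (2 * PI * t * x)) /\
                                        (s <= Rabs t -> cos (2 * PI * t * x) <= c0)).
  { intros t Ht. rewrite cos_abs. assert (Hs' : Rabs s <= r) by (rewrite Rabs_right; lra).
    pose proof (Hpi t Ht). pose proof (Hpi s Hs'). rewrite (Rabs_right s) in * by lra.
    unfold c0. split; intro; apply cos_decr_1; try lra; apply Rmult_le_compat_r; nra. }
  pose proof (cmp _ _ _ _ _ s r pK1 pK2 Hs HG HH) as M.
  assert (Main : f x <= 0 + (1 - c0) / 2 * (1 + -1 * 0) + RiemannInt pK1 + RiemannInt pK2).
  { apply M.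
    - intros y Hy. pose proof (Hpos y Hy). pose proof (COS_bound (2 * PI * y * x)).
      cbv beta; unfold Rabs; destruct (Rcase_abs (f y)); nra.
    - intros y Hy. destruct (Hc0 y ltac:(lra)) as [C _]. specialize (C ltac:(lra)).
      pose proof (COS_bound (2 * PI * y * x)). assert (Cc : -1 <= c0 <= 1) by apply COS_bound.
     
      cbv beta; unfold Rabs; destruct (Rcase_abs (f y)); nra.
    - intros y Hy. destruct (Hc0 y ltac:(lra)) as [_ C]. specialize (C ltac:(lra)).
      pose proof (COS_bound (2 * PI * y * x)). assert (Cc : -1 <= c0 <= 1) by apply COS_bound.
      pose proof (Hge y).
      cbv beta; unfold Rabs; destruct (Rcase_abs (f y)); nra. }
  assert (B1 : (c0 - 1) * (- s - - r) <= RiemannInt pK1).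
  { apply (RiemannInt_const_bound (u := c0 + 1) pK1); [lra|]. intros t _. pose proof (COS_bound (2 * PI * t * x)); lra. }
  assert (B2 : (c0 - 1) * (r - s) <= RiemannInt pK2).
  { apply (RiemannInt_const_bound (u := c0 + 1) pK2); [lra|]. intros t _. pose proof (COS_bound (2 * PI * t * x)); lra. }
  assert (Eq : 0 + (1 - c0) / 2 * (1 + -1 * 0) + RiemannInt pK1 + RiemannInt pK2 =
    1 / 2 + (sin (2 * PI * (r - 1 / 4) * x) - sin (2 * PI * r * x)) / (PI * x)).
  { rewrite <- V1, <- V2. unfold minus, plus, opp; simpl.
    replace (2 * PI * - s * x) with (- (2 * PI * s * x)) by ring.
    replace (2 * PI * - r * x) with (- (2 * PI * r * x)) by ring.
    rewrite !sin_neg. unfold s. field. split; apply Rgt_not_eq; lra. }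
  apply (Rle_trans _ (0 + (1 - c0) / 2 * (1 + -1 * 0) + RiemannInt pK1 + RiemannInt pK2)); [|right; exact Eq]. unfold pos_part. apply Rmax_lub; [lra|].
  replace (- s - - r) with (1/4) in B1 by (unfold s; ring). replace (r - s) with (1/4) in B2 by (unfold s; ring). lra.
Qed.
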